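(* Let $\Sigma$ be a finite alphabet. A language $L\subseteq\Sigma^*$ is regular in the classical sense if and only if the set $\{\triangleleft\, w\,\triangleright \mid w\in L\}$ is the language of arrows recognized by some nondeterministic finite-state automaton over the category $\mathcal{F}(\mathrm{Br}(\Sigma))$.
   Context: $\mathrm{Br}(\Sigma)$ is the graph with three nodes $\bot,*,\top$, a loop $a:*\to *$ for each $a\in\Sigma$, an edge $\triangleleft:\bot\to *$ and an edge $\triangleright:*\to\top$; $\mathcal{F}(\mathrm{Br}(\Sigma))$ is the free category it generates (objects are nodes, arrows are finite paths), so the arrows $\bot\to\top$ are exactly the paths $\triangleleft\, w\,\triangleright$ for $w\in\Sigma^*$. Composition is written diagrammatically. A functor $p:\mathcal{D}\to\mathcal{C}$ is ULF if for every arrow $\alpha$ of $\mathcal{D}$ and arrows $u,v$ of $\mathcal{C}$ with $p(\alpha)=uv$ there is a unique pair $\beta,\gamma$ with $\alpha=\beta\gamma$, $p(\beta)=u$, $p(\gamma)=v$; it is finitary if $p^{-1}(A)$ and $p^{-1}(w)$ are finite for every object $A$ and arrow $w$ of $\mathcal{C}$. A nondeterministic finite-state automaton over a category $\mathcal{C}$ is a tuple $M=(\mathcal{C},\mathcal{Q},p,q_0,q_f)$ with $p:\mathcal{Q}\to\mathcal{C}$ a finitary ULF functor and $q_0,q_f$ objects of $\mathcal{Q}$; the language of arrows it recognizes is $\{p(\alpha)\mid \alpha:q_0\to q_f \text{ in } \mathcal{Q}\}\subseteq \mathcal{C}(p(q_0),p(q_f))$. ''Regular in the classical sense'' means recognized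 by a classical nondeterministic finite automaton over $\Sigma$ (finite set of states, finite set of labelled transitions, a set of initial states and a set of accepting states, no $\epsilon$-transitions). *)

(* Defs.v *)
From mathcomp Require Import all_boot.
From Stdlib Require List.

Set Implicit Arguments.
Unset Strict Implicit.
Unset Printing Implicit Defensive.

(* Composition is written DIAGRAMMATICALLY: cat_comp f g = "f then g" *)
(* and is only meaningful when cat_cod f = cat_dom g.                 *)
Record Cat := {
  cat_ob : Type;
  cat_arr : Type;
  cat_dom : cat_arr -> cat_ob;
  cat_cod : cat_arr -> cat_ob;
  cat_id : cat_ob -> cat_arr;
  cat_comp : cat_arr -> cat_arr -> cat_arr;
  cat_dom_id : forall A, cat_dom (cat_id A) = A;
  cat_cod_id : forall A, cat_cod (cat_id A) = A;
  cat_dom_comp : forall f g, cat_cod f = cat_dom g ->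
      cat_dom (cat_comp f g) = cat_dom f;
  cat_cod_comp : forall f g, cat_cod f = cat_dom g ->
      cat_cod (cat_comp f g) = cat_cod g;
  cat_comp_idl : forall f, cat_comp (cat_id (cat_dom f)) f = f;
  cat_comp_idr : forall f, cat_comp f (cat_id (cat_cod f)) = f;
  cat_comp_assoc : forall f g h, cat_cod f = cat_dom g -> cat_cod g = cat_dom h ->
      cat_comp (cat_comp f g) h = cat_comp f (cat_comp g h)
}.

Record Functor (D C : Cat) := {
  fobj : cat_ob D -> cat_ob C;
  farr : cat_arr D -> cat_arr C;
  farr_dom : forall f, cat_dom (farr f) = fobj (cat_dom f);
  farr_cod : forall f, cat_cod (farr f) = fobj (cat_cod f);
  farr_id : forall A, farr (cat_id A) = cat_id (fobj A);
  farr_comp : forall f g, cat_cod f = cat_dom g ->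
      farr (cat_comp f g) = cat_comp (farr f) (farr g)
}.

Definition ULF (D C : Cat) (p : Functor D C) : Prop :=
  forall (alpha : cat_arr D) (u v : cat_arr C),
    cat_cod u = cat_dom v ->
    farr p alpha = cat_comp u v ->
    exists beta gamma : cat_arr D,
      [/\ cat_cod beta = cat_dom gamma,
          alpha = cat_comp beta gamma,
          farr p beta = u, farr p gamma = v &
          forall beta' gamma' : cat_arr D,
            cat_cod beta' = cat_dom gamma' ->
            alpha = cat_comp beta' gamma' ->
            farr p beta' = u -> farr p gamma' = v ->
            beta' = beta /\ gamma' = gamma].

Definition finitary (D C : Cat) (p : Functor D C) : Prop :=
  (forall A : cat_ob C, exists l : list (cat_ob D),
      forall X, fobj p X = A -> List.In X l) /\
  (forall w : cat_arr C, exists l : list (cat_arr D),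
      forall a, farr p a = w -> List.In a l).

Record CatNFA (C : Cat) := {
  nfa_Q : Cat;
  nfa_p : Functor nfa_Q C;
  nfa_ULF : ULF nfa_p;
  nfa_finitary : finitary nfa_p;
  nfa_q0 : cat_ob nfa_Q;
  nfa_qf : cat_ob nfa_Q
}.

Definition nfa_lang (C : Cat) (M : CatNFA C) : cat_arr C -> Prop :=
  fun w => exists alpha : cat_arr (nfa_Q M),
    [/\ cat_dom alpha = nfa_q0 M, cat_cod alpha = nfa_qf M &
        farr (nfa_p M) alpha = w].

Inductive brnode := NBot | NStar | NTop.

Definition brnode_eqb (x y : brnode) : bool :=
  match x, y with
  | NBot, NBot | NStar, NStar | NTop, NTop => true
  | _, _ => false
  end.

Lemma brnode_eqbP x y : brnode_eqb x y = true <-> x = y.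
Proof. by case: x; case: y. Qed.

Section Br.
Variable Sigma : finType.

(* edges: a loop a : * -> * for each letter, <| : bot -> *, |> : * -> top *)
Inductive bredge := ELoop of Sigma | ELeft | ERight.

Definition esrc (e : bredge) : brnode :=
  match e with ELoop _ => NStar | ELeft => NBot | ERight => NStar end.
Definition etgt (e : bredge) : brnode :=
  match e with ELoop _ => NStar | ELeft => NStar | ERight => NTop end.

Fixpoint path_ok (s : brnode) (es : seq bredge) : bool :=
  match es with
  | [::] => true
  | e :: es' => brnode_eqb (esrc e) s && path_ok (etgt e) es'
  end.

Fixpoint path_end (s : brnode) (es : seq bredge) : brnode :=
  match es with
  | [::] => s
  | e :: es' => path_end (etgt e) es'
  end.

Lemma path_end_cat s a b : path_end s (a ++ b) = path_end (path_end s a) b.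
Proof. by elim: a s => //= e a IH s. Qed.

Lemma path_ok_cat s a b :
  path_ok s (a ++ b) = path_ok s a && path_ok (path_end s a) b.
Proof. by elim: a s => //= e a IH s; rewrite IH andbA. Qed.

(* arrows of F(Br(Sigma)): finite paths (source node + list of edges) *)
Definition brArr := {x : brnode * seq bredge | path_ok x.1 x.2}.

Definition br_dom (f : brArr) : brnode := (val f).1.
Definition br_cod (f : brArr) : brnode := path_end (val f).1 (val f).2.
Definition br_id (A : brnode) : brArr := exist _ (A, [::]) (erefl true).
Definition br_comp (f g : brArr) : brArr :=
  odflt f (insub ((val f).1, (val f).2 ++ (val g).2)).

Lemma br_comp_val f g : br_cod f = br_dom g ->
  val (br_comp f g) = ((val f).1, (val f).2 ++ (val g).2).
Proof.
move=> H; rewrite /br_comp; case: insubP => [u _ -> //|].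
rewrite /= path_ok_cat (valP f) /=.
by move: (valP g); rewrite /br_cod /br_dom in H *; rewrite H => ->.
Qed.

Lemma br_dom_comp f g : br_cod f = br_dom g -> br_dom (br_comp f g) = br_dom f.
Proof. by move=> H; rewrite /br_dom br_comp_val. Qed.

Lemma br_cod_comp f g : br_cod f = br_dom g -> br_cod (br_comp f g) = br_cod g.
Proof.
by move=> H; rewrite /br_cod br_comp_val //= path_end_cat; rewrite /br_cod in H; rewrite H.
Qed.

Lemma br_comp_idl f : br_comp (br_id (br_dom f)) f = f.
Proof. by apply: val_inj; rewrite br_comp_val //=; case: f => -[]. Qed.

Lemma br_comp_idr f : br_comp f (br_id (br_cod f)) = f.
Proof. by apply: val_inj; rewrite br_comp_val //= cats0; case: f => -[]. Qed.

Lemma br_comp_assoc f g h : br_cod f = br_dom g -> br_cod g = br_dom h ->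
  br_comp (br_comp f g) h = br_comp f (br_comp g h).
Proof.
move=> Hfg Hgh; apply: val_inj.
have H1 : br_cod (br_comp f g) = br_dom h by rewrite br_cod_comp.
have H2 : br_cod f = br_dom (br_comp g h) by rewrite br_dom_comp.
rewrite (br_comp_val H1) (br_comp_val H2) (br_comp_val Hfg) (br_comp_val Hgh).
by rewrite /= catA.
Qed.

Definition FBr : Cat :=
  {| cat_ob := brnode; cat_arr := brArr; cat_dom := br_dom; cat_cod := br_cod;
     cat_id := br_id; cat_comp := br_comp;
     cat_dom_id := fun _ => erefl; cat_cod_id := fun _ => erefl;
     cat_dom_comp := br_dom_comp; cat_cod_comp := br_cod_comp;
     cat_comp_idl := br_comp_idl; cat_comp_idr := br_comp_idr;
     cat_comp_assoc := br_comp_assoc |}.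

(* the arrow  <| w |> : bot -> top *)
Lemma brWord_ok (w : seq Sigma) :
  path_ok NBot (ELeft :: map ELoop w ++ [:: ERight]).
Proof. by rewrite /=; elim: w. Qed.

Definition brWord (w : seq Sigma) : brArr :=
  exist _ (NBot, ELeft :: map ELoop w ++ [:: ERight]) (brWord_ok w).

Fixpoint nfa_accepts (Q : finType) (delta : Q -> Sigma -> Q -> bool)
    (F : {set Q}) (q : Q) (w : seq Sigma) : bool :=
  match w with
  | [::] => q \in F
  | a :: w' => [exists q' : Q, delta q a q' && nfa_accepts delta F q' w']
  end.

Definition classically_regular (L : seq Sigma -> Prop) : Prop :=
  exists (Q : finType) (delta : Q -> Sigma -> Q -> bool) (I F : {set Q}),
    forall w, L w <-> exists2 q, q \in I & nfa_accepts delta F q w.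

End Br.

(* Main.v *)
From HB Require Import structures.
Require Import Defs.
From mathcomp Require Import all_boot.
From Stdlib Require Import ClassicalEpsilon.
Set Implicit Arguments. Unset Strict Implicit. Unset Printing Implicit Defensive.

Definition bcode (S : finType) (e : bredge S) : S + bool :=
  match e with ELoop a => inl a | ELeft => inr false | ERight => inr true end.
Definition bdecode (S : finType) (x : S + bool) : bredge S :=
  match x with inl a => ELoop a | inr false => ELeft S | inr true => ERight S end.
Lemma bcodeK S : cancel (@bcode S) (@bdecode S). Proof. by case. Qed.
HB.instance Definition _ (S : finType) := Finite.copy (bredge S) (can_type (@bcodeK S)).

Lemma InP (T : eqType) (x : T) (s : seq T) : reflect (List.In x s) (x \in s).
Proof.
elim: s => [|y s IH] /=; first by constructor.
rewrite in_cons; apply: (iffP orP) => [[/eqP->|/IH]|[->|/IH]]; by auto.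
Qed.

Section Fwd.
Variables (Sigma Q : finType) (delta : Q -> Sigma -> Q -> bool) (I F : {set Q}).
Local Notation qnode := (bool + Q)%type.
Definition qedge_ok (s : qnode) (e : bredge Sigma) (t : qnode) : bool :=
  match e, s, t with
  | ELeft, inl false, inr q => q \in I
  | ELoop a, inr q, inr q' => delta q a q'
  | ERight, inr q, inl true => q \in F
  | _, _, _ => false end.
Fixpoint qok (s : qnode) (es : seq (bredge Sigma * qnode)) : bool :=
  match es with [::] => true | et :: es' => qedge_ok s et.1 et.2 && qok et.2 es' end.
Fixpoint qend (s : qnode) (es : seq (bredge Sigma * qnode)) : qnode :=
  match es with [::] => s | et :: es' => qend et.2 es' end.

Lemma qend_cat s a b : qend s (a ++ b) = qend (qend s a) b.
Proof. by elim: a s => //= e a IH s. Qed.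
Lemma qok_cat s a b : qok s (a ++ b) = qok s a && qok (qend s a) b.
Proof. by elim: a s => //= e a IH s; rewrite IH andbA. Qed.

Definition qArr := {x : qnode * seq (bredge Sigma * qnode) | qok x.1 x.2}.
Definition q_dom (f : qArr) : qnode := (val f).1.
Definition q_cod (f : qArr) : qnode := qend (val f).1 (val f).2.
Definition q_id (A : qnode) : qArr := exist _ (A, [::]) (erefl true).
Definition q_comp (f g : qArr) : qArr :=
  odflt f (insub ((val f).1, (val f).2 ++ (val g).2)).

Lemma q_comp_val f g : q_cod f = q_dom g ->
  val (q_comp f g) = ((val f).1, (val f).2 ++ (val g).2).
Proof.
move=> H; rewrite /q_comp; case: insubP => [u _ -> //|].
rewrite /= qok_cat (valP f) /=.
by move: (valP g); rewrite /q_cod /q_dom in H *; rewrite H => ->.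
Qed.
Lemma q_dom_comp f g : q_cod f = q_dom g -> q_dom (q_comp f g) = q_dom f.
Proof. by move=> H; rewrite /q_dom q_comp_val. Qed.
Lemma q_cod_comp f g : q_cod f = q_dom g -> q_cod (q_comp f g) = q_cod g.
Proof.
by move=> H; rewrite /q_cod q_comp_val //= qend_cat; rewrite /q_cod in H; rewrite H.
Qed.
Lemma q_comp_idl f : q_comp (q_id (q_dom f)) f = f.
Proof. by apply: val_inj; rewrite q_comp_val //=; case: f => -[]. Qed.
Lemma q_comp_idr f : q_comp f (q_id (q_cod f)) = f.
Proof. by apply: val_inj; rewrite q_comp_val //= cats0; case: f => -[]. Qed.
Lemma q_comp_assoc f g h : q_cod f = q_dom g -> q_cod g = q_dom h ->
  q_comp (q_comp f g) h = q_comp f (q_comp g h).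
Proof.
move=> Hfg Hgh; apply: val_inj.
have H1 : q_cod (q_comp f g) = q_dom h by rewrite q_cod_comp.
have H2 : q_cod f = q_dom (q_comp g h) by rewrite q_dom_comp.
rewrite (q_comp_val H1) (q_comp_val H2) (q_comp_val Hfg) (q_comp_val Hgh).
by rewrite /= catA.
Qed.

Definition QCat : Cat :=
  {| cat_ob := qnode; cat_arr := qArr; cat_dom := q_dom; cat_cod := q_cod;
     cat_id := q_id; cat_comp := q_comp;
     cat_dom_id := fun _ => erefl; cat_cod_id := fun _ => erefl;
     cat_dom_comp := q_dom_comp; cat_cod_comp := q_cod_comp;
     cat_comp_idl := q_comp_idl; cat_comp_idr := q_comp_idr;
     cat_comp_assoc := q_comp_assoc |}.

Definition nmap (s : qnode) : brnode :=
  match s with inl false => NBot | inl true => NTop | inr _ => NStar end.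

Lemma qedge_br s e t : qedge_ok s e t -> esrc e = nmap s /\ etgt e = nmap t.
Proof. by case: e => [a||]; case: s => [[]|q]; case: t => [[]|q']. Qed.

Lemma qok_path s es : qok s es -> path_ok (nmap s) (map fst es).
Proof.
elim: es s => //= -[e t] es IH s /= /andP[/qedge_br[-> ->] /IH ->].
by rewrite andbT; apply/brnode_eqbP.
Qed.
Lemma qok_end s es : qok s es -> path_end (nmap s) (map fst es) = nmap (qend s es).
Proof. by elim: es s => //= -[e t] es IH s /= /andP[/qedge_br[_ ->] /IH]. Qed.

Definition farrQ (f : qArr) : brArr Sigma :=
  exist _ (nmap (val f).1, map fst (val f).2) (qok_path (valP f)).

Lemma farrQ_cod f : br_cod (farrQ f) = nmap (q_cod f).
Proof. exact: qok_end (valP f). Qed.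
Lemma farrQ_id A : farrQ (q_id A) = br_id Sigma (nmap A).
Proof. exact: val_inj. Qed.
Lemma farrQ_comp f g : q_cod f = q_dom g ->
  farrQ (q_comp f g) = br_comp (farrQ f) (farrQ g).
Proof.
move=> H; apply: val_inj; rewrite br_comp_val; last by rewrite farrQ_cod H.
by rewrite /= q_comp_val //= map_cat.
Qed.

Definition QFun : Functor QCat (FBr Sigma) :=
  @Build_Functor QCat (FBr Sigma) nmap farrQ (fun _ => erefl)
     farrQ_cod farrQ_id farrQ_comp.

Lemma QFun_ULF : ULF QFun.
Proof.
move=> alpha u v /= Huv Hal.
have Hv := f_equal val Hal; rewrite /= br_comp_val // in Hv.
case: alpha Hal Hv => -[s es] /= ok Hal [Hs Hes].
set n := size (val u).2.
have okt : qok s (take n es) && qok (qend s (take n es)) (drop n es).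
  by rewrite -qok_cat cat_take_drop.
case/andP: okt => ok1 ok2.
exists (exist _ (s, take n es) ok1), (exist _ (qend s (take n es), drop n es) ok2).
have Hcat : (val u).2 ++ (val v).2 = map fst es by rewrite Hes.
have Hsz : size (map fst (take n es)) = n.
  by rewrite map_take -Hcat take_size_cat.
split => //.
- apply: val_inj; rewrite /= q_comp_val //=; by rewrite cat_take_drop.
- apply: val_inj => /=; rewrite map_take -Hcat take_size_cat // Hs.
  exact: esym (surjective_pairing _).
- apply: val_inj => /=; rewrite map_drop -Hcat drop_size_cat //.
  have := qok_end ok1; rewrite Hs map_take -Hcat take_size_cat // => <-.
  by rewrite /br_cod in Huv; rewrite Huv; exact: esym (surjective_pairing _).
- move=> b g Hbg Hal' Hb Hg.
  have Hv' := f_equal val Hal'; rewrite /= q_comp_val // in Hv'.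
  case: Hv' => Hs' Hes'.
  have Hbs : size (val b).2 = n.
    by rewrite /n -Hb /= size_map.
  have Htk : take n es = (val b).2 by rewrite Hes' -Hbs take_size_cat.
  have Hdr : drop n es = (val g).2 by rewrite Hes' -Hbs drop_size_cat.
  split; apply: val_inj => /=.
  + by rewrite Htk Hs'; exact: surjective_pairing _.
  + rewrite Hdr Htk Hs'; rewrite /q_cod /q_dom in Hbg; rewrite Hbg.
    exact: surjective_pairing _.
Qed.
End Fwd.

Section Fwd2.
Variables (Sigma Q : finType) (delta : Q -> Sigma -> Q -> bool) (I F : {set Q}).

Lemma QFun_fin : finitary (QFun delta I F).
Proof.
split.
- move=> A; exists (enum {: bool + Q}) => X _; apply/InP; by rewrite mem_enum.
- move=> w; set n := size (val w).2.
  pose cand := [seq (x.1, val x.2) | x <- enum {: (bool + Q)%type * n.-tuple (bredge Sigma * (bool + Q)%type)}].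
  exists (pmap (insub : _ -> option (qArr delta I F)) cand) => a Ha; apply/InP.
  rewrite mem_pmap_sub.
  have Ht : size (val a).2 == n.
    by rewrite /n -Ha /= size_map.
  apply/mapP; exists ((val a).1, Tuple Ht); first by rewrite mem_enum.
  exact: surjective_pairing.
Qed.

Lemma qedge_top e (t : (bool + Q)%type) : qedge_ok delta I F (inl true) e t = false.
Proof. by case: e => [a||]; case: t => [[]|q]. Qed.

Lemma run_star q es : qok delta I F (inr q) es -> qend (inr q) es = inl true ->
  exists w, nfa_accepts delta F q w /\ map fst es = map (@ELoop Sigma) w ++ [:: ERight Sigma].
Proof.
elim: es q => [|[e t] es IH] q //= /andP[He Hok] Hend.
case: e He => [a||] /=; case: t Hok Hend => [[]|q'] //= Hok Hend He.
- have [w [Hw Hm]] := IH q' Hok Hend.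
  exists (a :: w); split; last by rewrite Hm.
  by apply/existsP; exists q'; rewrite He.
- case: es Hok Hend {IH} => [|[e t] es] //=; last by rewrite qedge_top.
  by move=> _ _; exists [::].
Qed.

Lemma run_mk q w : nfa_accepts delta F q w -> exists es,
  [/\ qok delta I F (inr q) es, qend (inr q) es = inl true &
      map fst es = map (@ELoop Sigma) w ++ [:: ERight Sigma]].
Proof.
elim: w q => [|a w IH] q /=.
- by move=> Hq; exists [:: (ERight Sigma, inl true)]; rewrite /= Hq.
- case/existsP => q' /andP[Hd /IH[es [Hok Hend Hm]]].
  by exists ((ELoop a, inr q') :: es); rewrite /= Hd Hok Hend Hm.
Qed.

Definition QNFA : CatNFA (FBr Sigma) :=
  @Build_CatNFA (FBr Sigma) (QCat delta I F) (QFun delta I F) (@QFun_ULF Sigma Q delta I F)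
     QFun_fin (inl false : (bool + Q)%type) (inl true).

Lemma fwd_lang (beta : brArr Sigma) : nfa_lang QNFA beta <->
  exists2 w, exists2 q, q \in I & nfa_accepts delta F q w & beta = brWord w.
Proof.
split.
- case=> alpha [Hd Hc <-].
  suff [w Hw Hm] : exists2 w, (exists2 q, q \in I & nfa_accepts delta F q w) &
      map fst (val alpha).2 = ELeft Sigma :: map (@ELoop Sigma) w ++ [:: ERight Sigma].
    exists w => //; apply: val_inj; rewrite /= /q_dom in Hd; by rewrite /= Hm Hd.
  move: Hd Hc; case: alpha => -[s es] ok /=; rewrite /q_dom /q_cod /= => Hs Hc.
  subst s; move: ok Hc.
  case: es => [|[e t] es] //= /andP[He Hok] Hc.
  case: e He => [a||] //; case: t Hok Hc => [[]|q] //= Hok Hc Hq.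
  have [w [Hw Hm]] := run_star Hok Hc.
  exists w; first by exists q.
  by rewrite Hm.
- case=> w [q Hq Hacc] ->.
  have [es [Hok Hend Hm]] := run_mk Hacc.
  have ok : qok delta I F (inl false) ((ELeft Sigma, inr q) :: es) by rewrite /= Hq Hok.
  exists (exist _ (inl false, (ELeft Sigma, inr q) :: es) ok); split => //.
  by apply: val_inj; rewrite /= Hm.
Qed.
End Fwd2.

Definition pb (P : Prop) : bool := if excluded_middle_informative P then true else false.
Lemma pbP P : pb P <-> P.
Proof. by rewrite /pb; case: excluded_middle_informative. Qed.

Lemma brWord_inj (Sigma : finType) : injective (@brWord Sigma).
Proof.
move=> w1 w2 /(f_equal val) /= [] H; rewrite !cats1 in H.
case/rcons_inj: H => /inj_map -> //.
by move=> x y [].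
Qed.

Section Bwd.
Variables (Sigma : finType) (M : CatNFA (FBr Sigma)) (l : list (cat_ob (nfa_Q M))).
Hypothesis Hl : forall X, fobj (nfa_p M) X = NStar -> List.In X l.
Let N := List.length l.
Let p := nfa_p M.
Definition st (i : 'I_N) := List.nth i l (nfa_q0 M).
Definition loopArr (a : Sigma) : brArr Sigma := exist _ (NStar, [:: ELoop a]) erefl.
Definition leftArr : brArr Sigma := exist _ (NBot, [:: ELeft Sigma]) erefl.
Definition rightArr : brArr Sigma := exist _ (NStar, [:: ERight Sigma]) erefl.
Lemma starWord_ok (w : seq Sigma) : path_ok NStar (map (@ELoop Sigma) w ++ [:: ERight Sigma]).
Proof. by elim: w. Qed.
Definition starWord w : brArr Sigma := exist _ (NStar, map (@ELoop Sigma) w ++ [:: ERight Sigma]) (starWord_ok w).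

Definition bdelta (i : 'I_N) (a : Sigma) (j : 'I_N) : bool :=
  pb (exists b, [/\ cat_dom b = st i, cat_cod b = st j & farr p b = loopArr a]).
Definition bI : {set 'I_N} :=
  [set i | pb (exists b, [/\ cat_dom b = nfa_q0 M, cat_cod b = st i & farr p b = leftArr])].
Definition bF : {set 'I_N} :=
  [set i | pb (exists b, [/\ cat_dom b = st i, cat_cod b = nfa_qf M & farr p b = rightArr])].

Lemma idx X : fobj p X = NStar -> exists i : 'I_N, st i = X.
Proof.
move/Hl/(List.In_nth _ _ (nfa_q0 M)) => [n [Hn <-]].
have H : n < N by apply/ltP.
by exists (Ordinal H).
Qed.

Lemma dom_star g w : farr p g = starWord w -> exists i : 'I_N, st i = cat_dom g.
Proof. by move=> Hg; apply: idx; rewrite -farr_dom Hg. Qed.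

Lemma acc_to w i : nfa_accepts bdelta bF i w ->
  exists alpha, [/\ cat_dom alpha = st i, cat_cod alpha = nfa_qf M & farr p alpha = starWord w].
Proof.
elim: w i => [|a w IH] i /=.
- rewrite inE => /pbP [g [H1 H2 H3]]; exists g; split => //.
  by rewrite H3; apply: val_inj.
- case/existsP => j /andP[/pbP [b [Hb1 Hb2 Hb3]] /IH [g [Hg1 Hg2 Hg3]]].
  have Hbg : cat_cod b = cat_dom g by rewrite Hb2 Hg1.
  exists (cat_comp b g); split.
  + by rewrite cat_dom_comp.
  + by rewrite cat_cod_comp.
  + rewrite farr_comp // Hb3 Hg3; apply: val_inj.
    by rewrite (@br_comp_val Sigma (loopArr a) (starWord w) erefl).
Qed.

Lemma acc_from w : forall i alpha, cat_dom alpha = st i -> cat_cod alpha = nfa_qf M ->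
  farr p alpha = starWord w -> nfa_accepts bdelta bF i w.
Proof.
elim: w => [|a w IH] i alpha Hd Hc Hf /=.
- rewrite inE; apply/pbP; exists alpha; split => //; rewrite Hf; exact: val_inj.
- have Huv : @cat_cod (FBr Sigma) (loopArr a) = @cat_dom (FBr Sigma) (starWord w) by [].
  have Hsplit : farr p alpha = @cat_comp (FBr Sigma) (loopArr a) (starWord w).
    rewrite Hf; apply: val_inj.
    by rewrite (@br_comp_val Sigma (loopArr a) (starWord w) erefl).
  have [b [g [Hbg Hab Hb Hg _]]] := nfa_ULF Huv Hsplit.
  have [j Hj] := dom_star Hg.
  apply/existsP; exists j; apply/andP; split.
  + apply/pbP; exists b; split => //.
    * by rewrite -Hd Hab cat_dom_comp.
    * by rewrite Hbg Hj.
  + apply: (IH j g) => //.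
    by rewrite -Hc Hab cat_cod_comp.
Qed.

Lemma bwd_main (L : seq Sigma -> Prop) :
  (forall alpha, nfa_lang M alpha <-> exists2 w, L w & alpha = brWord w) ->
  forall w, L w <-> exists2 q, q \in bI & nfa_accepts bdelta bF q w.
Proof.
move=> HM w; split.
- move=> Lw.
  have [alpha [Hd Hc Hf]] : nfa_lang M (brWord w) by apply/HM; exists w.
  have Huv : @cat_cod (FBr Sigma) leftArr = @cat_dom (FBr Sigma) (starWord w) by [].
  have Hsplit : farr p alpha = @cat_comp (FBr Sigma) leftArr (starWord w).
    rewrite Hf; apply: val_inj.
    by rewrite (@br_comp_val Sigma leftArr (starWord w) erefl).
  have [b [g [Hbg Hab Hb Hg _]]] := nfa_ULF Huv Hsplit.
  have [i Hi] := dom_star Hg.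
  exists i.
  + rewrite inE; apply/pbP; exists b; split => //.
    * by rewrite -Hd Hab cat_dom_comp.
    * by rewrite Hbg Hi.
  + apply: (acc_from (alpha := g)) => //.
    by rewrite -Hc Hab cat_cod_comp.
- case=> i; rewrite inE => /pbP[b [Hb1 Hb2 Hb3]] /acc_to [g [Hg1 Hg2 Hg3]].
  have Hbg : cat_cod b = cat_dom g by rewrite Hb2 Hg1.
  have : nfa_lang M (brWord w).
    exists (cat_comp b g); split.
    + by rewrite cat_dom_comp.
    + by rewrite cat_cod_comp.
    + rewrite farr_comp // Hb3 Hg3; apply: val_inj.
      by rewrite (@br_comp_val Sigma leftArr (starWord w) erefl).
  by case/HM => w' Lw' /brWord_inj ->.
Qed.
End Bwd.

Theorem mainTheorem4 (Sigma : finType) (L : seq Sigma -> Prop) :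
  classically_regular L <->
  exists M : CatNFA (FBr Sigma),
    forall alpha : cat_arr (FBr Sigma),
      nfa_lang M alpha <-> exists2 w, L w & alpha = brWord w.
Proof.
split.
- case=> Q [delta [I [F HL]]].
  exists (QNFA delta I F) => beta; rewrite fwd_lang.
  by split; case=> w H ->; exists w => //; apply/HL.
- case=> M HM.
  have [l Hl] := (nfa_finitary M).1 NStar.
  exists 'I_(List.length l), (@bdelta Sigma M l), (@bI Sigma M l), (@bF Sigma M l).
  exact: (bwd_main Hl).
Qed.
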